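(* Let $T$ be a c.n.u. contraction on $H$ and let $(H_+,H_-,\Gamma_+,\Gamma_-)$ be a boundary quadruple for $A_T^{\perp_s}$ with contractive Weyl function $B$. For $s,t\in\mathfrak{H}$, one has $(s,t)\in\widehat{A_T^{\perp_s}}$ if and only if there exist $x_\pm\in H_\pm$ such that $\lambda f_s(\lambda)-f_t(\lambda)=B(\lambda)x_+-x_-$ for all $\lambda\in\mathbb{D}_+$ and $f_s(\lambda)-\lambda f_t(\lambda)=x_+-B(\bar\lambda)^*x_-$ for all $\lambda\in\mathbb{D}_-$.
   Context: $H$ is an infinite-dimensional separable complex Hilbert space with inner product $(\cdot,\cdot)_H$; $T\in\mathbb{B}(H)$, $\|T\|\le1$, is completely non-unitary. $\mathbb{K}=\ker(I-T^*T)$. $\mathbb{H}=H\oplus_\perp H$ with $[(x_1,x_2),(y_1,y_2)]=i(x_1,y_1)_H-i(x_2,y_2)_H$; $S^{\perp_s}=\{a:[a,b]=0\ \forall b\in S\}$; $A_T=\{(x,Tx):x\in\mathbb{K}\}$. $\mathbb{D}_\pm$ are two copies of the open unit disc; for $\lambda\in\mathbb{D}_\pm$, $\bar\lambda$ is regarded as a point of $\mathbb{D}_\mp$. $N_\lambda=\{(x,\lambda x)\}\cap A_T^{\perp_s}$ ($\lambda\in\mathbb{D}_+$), $N_\lambda=\{(\lambda x,x)\}\cap A_T^{\perp_s}$ ($\lambda\in\mathbb{D}_-$). Boundary quadruple: Hilbert spaces $H_\pm$, linear $\Gamma_\pm:A_T^{\perp_s}\to H_\pm$ with $(\Gamma_+,\Gamma_-)$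 bounded, onto $H_+\oplus_\perp H_-$, kernel $A_T$, and $[a,b]=i(\Gamma_+a,\Gamma_+b)-i(\Gamma_-a,\Gamma_-b)$. Contractive Weyl function $B$: for $\lambda\in\mathbb{D}_+$, $\Gamma_+|_{N_\lambda}$ bijective onto $H_+$, $\Gamma_-a=B(\lambda)\Gamma_+a$ on $N_\lambda$, $\|B(\lambda)\|<1$; for $\lambda\in\mathbb{D}_-$, $\Gamma_-|_{N_\lambda}$ bijective onto $H_-$ and $\Gamma_+a=B(\bar\lambda)^*\Gamma_-a$ on $N_\lambda$. $\gamma_\pm,\varphi_\pm$: $\gamma_+(\lambda)x\in N_\lambda$, $\Gamma_+\gamma_+(\lambda)x=x$ ($\lambda\in\mathbb{D}_+$); $\gamma_-(\lambda)x\in N_\lambda$, $\Gamma_-\gamma_-(\lambda)x=x$ ($\lambda\in\mathbb{D}_-$); $\varphi_+=pr_1\circ\gamma_+$, $\varphi_-=pr_2\circ\gamma_-$. $E_\lambda=pr_1(N_\lambda)$ or $pr_2(N_\lambda)$ according as $\lambda\in\mathbb{D}_+$ or $\mathbb{D}_-$; $F^\dagger_\lambda=E_{\bar\lambda}$, $F_\lambda$ its conjugate-linear dual, pairing $((\cdot,\cdot))$. For $x\in H$, $\hat x(\lambda)\in F_\lambda$ is $\omega\mapsto(x,\omega)_H$; $x\mapsto\hat x$ is injective, and $\mathfrak{H}=\{\hat x:x\in H\}$ with $(\hat x,\hat y)_{\mathfrak{H}}=(x,y)_H$. For $S\subseteq\mathbb{H}$, $\hat S=\{(\hat x,\hat y):(x,y)\in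 S\}$. Trivialization: for $\lambda\in\mathbb{D}_+$, $(\varphi_-^\dagger(\lambda)\omega,z)_{H_-}=((\omega,\varphi_-(\bar\lambda)z))$; for $\lambda\in\mathbb{D}_-$, $(\varphi_+^\dagger(\lambda)\omega,z)_{H_+}=((\omega,\varphi_+(\bar\lambda)z))$; $f_s(\lambda)=\varphi_-^\dagger(\lambda)s(\lambda)$ on $\mathbb{D}_+$ and $\varphi_+^\dagger(\lambda)s(\lambda)$ on $\mathbb{D}_-$. *)

(* Defs.v *)
From mathcomp Require Import all_boot all_order all_algebra.
From mathcomp Require Export reals complex.
Set Implicit Arguments. Unset Strict Implicit. Unset Printing Implicit Defensive.
Import Order.TTheory GRing.Theory Num.Theory.
Local Open Scope ring_scope.
Local Open Scope complex_scope.

Section Defs.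
Context {R : realType}.
Local Notation C := R[i].

Definition inner_product (V : lmodType C) (ip : V -> V -> C) : Prop :=
  (forall (a : C) (x y z : V), ip (a *: x + y) z = a * ip x z + ip y z) /\
  (forall x y : V, ip y x = (ip x y)^*) /\
  (forall x : V, 0 <= ip x x) /\
  (forall x : V, ip x x = 0 -> x = 0).

Definition hnorm (V : lmodType C) (ip : V -> V -> C) (x : V) : C := sqrtC (ip x x).

Definition cvg_to (V : lmodType C) (ip : V -> V -> C) (u : nat -> V) (x : V) : Prop :=
  forall e : C, 0 < e -> exists N : nat, forall n, (N <= n)%N -> hnorm ip (u n - x) < e.

Definition cauchy_seq (V : lmodType C) (ip : V -> V -> C) (u : nat -> V) : Prop :=
  forall e : C, 0 < e -> exists N : nat, forall m n, (N <= m)%N -> (N <= n)%N ->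
    hnorm ip (u m - u n) < e.

Definition complete_ip (V : lmodType C) (ip : V -> V -> C) : Prop :=
  forall u : nat -> V, cauchy_seq ip u -> exists x, cvg_to ip u x.

Definition hilbert (V : lmodType C) (ip : V -> V -> C) : Prop :=
  inner_product ip /\ complete_ip ip.

Definition separable (V : lmodType C) (ip : V -> V -> C) : Prop :=
  exists e : nat -> V, forall (x : V) (eps : C), 0 < eps ->
    exists (n : nat) (c : 'I_n -> C), hnorm ip (x - \sum_(i < n) c i *: e i) < eps.

Definition infinite_dim (V : lmodType C) : Prop :=
  forall (n : nat) (e : 'I_n -> V), exists x : V,
    ~ (exists c : 'I_n -> C, x = \sum_(i < n) c i *: e i).

Definition lin_on (U V : lmodType C) (P : U -> Prop) (f : U -> V) : Prop :=
  forall (a : C) (x y : U), P x -> P y -> f (a *: x + y) = a *: f x + f y.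

Definition linear_map (U V : lmodType C) (f : U -> V) : Prop := lin_on (fun _ => True) f.

Definition is_adjoint (U V : lmodType C) (ipU : U -> U -> C) (ipV : V -> V -> C)
  (T : U -> V) (Tadj : V -> U) : Prop :=
  forall (x : U) (y : V), ipV (T x) y = ipU x (Tadj y).

Definition contraction (V : lmodType C) (ip : V -> V -> C) (T : V -> V) : Prop :=
  linear_map T /\ forall x, hnorm ip (T x) <= hnorm ip x.

Definition subspace (V : lmodType C) (M : V -> Prop) : Prop :=
  M 0 /\ forall (a : C) (x y : V), M x -> M y -> M (a *: x + y).

Definition closed_set (V : lmodType C) (ip : V -> V -> C) (M : V -> Prop) : Prop :=
  forall (u : nat -> V) (x : V), (forall n, M (u n)) -> cvg_to ip u x -> M x.

(* completely non-unitary: no nonzero closed reducing subspace on which T is unitary *)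
Definition cnu (V : lmodType C) (ip : V -> V -> C) (T Tadj : V -> V) : Prop :=
  forall M : V -> Prop, subspace M -> closed_set ip M ->
    (forall x, M x -> M (T x)) -> (forall x, M x -> M (Tadj x)) ->
    (forall x, M x -> Tadj (T x) = x /\ T (Tadj x) = x) ->
    forall x, M x -> x = 0.

Definition krein (V : lmodType C) (ip : V -> V -> C) (a b : V * V) : C :=
  'i * ip a.1 b.1 - 'i * ip a.2 b.2.

Definition Kset (V : lmodType C) (T Tadj : V -> V) (x : V) : Prop := Tadj (T x) = x.

Definition AT (V : lmodType C) (T Tadj : V -> V) (a : V * V) : Prop :=
  exists x, Kset T Tadj x /\ a = (x, T x).

Definition ATperp (V : lmodType C) (ip : V -> V -> C) (T Tadj : V -> V) (a : V * V) : Prop :=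
  forall b, AT T Tadj b -> krein ip a b = 0.

Definition disc (l : C) : Prop := `|l| < 1.

(* N_lambda for lambda in D_+ (Nplus) and lambda in D_- (Nminus), P = A_T^{perp_s} *)
Definition Nplus (V : lmodType C) (P : V * V -> Prop) (l : C) (a : V * V) : Prop :=
  a.2 = l *: a.1 /\ P a.
Definition Nminus (V : lmodType C) (P : V * V -> Prop) (l : C) (a : V * V) : Prop :=
  a.1 = l *: a.2 /\ P a.

Definition Eplus (V : lmodType C) (P : V * V -> Prop) (l : C) (w : V) : Prop :=
  exists a, Nplus P l a /\ a.1 = w.
Definition Eminus (V : lmodType C) (P : V * V -> Prop) (l : C) (w : V) : Prop :=
  exists a, Nminus P l a /\ a.2 = w.

Definition boundary_quadruple (V Hp Hm : lmodType C) (ip : V -> V -> C)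
  (ipp : Hp -> Hp -> C) (ipm : Hm -> Hm -> C) (P : V * V -> Prop)
  (Gp : V * V -> Hp) (Gm : V * V -> Hm) (T Tadj : V -> V) : Prop :=
  hilbert ipp /\ hilbert ipm /\
  lin_on P Gp /\ lin_on P Gm /\
  (exists c : C, forall a, P a ->
      ipp (Gp a) (Gp a) + ipm (Gm a) (Gm a) <= c * (ip a.1 a.1 + ip a.2 a.2)) /\
  (forall (u : Hp) (v : Hm), exists a, P a /\ Gp a = u /\ Gm a = v) /\
  (forall a, P a -> (Gp a = 0 /\ Gm a = 0 <-> AT T Tadj a)) /\
  (forall a b, P a -> P b ->
      krein ip a b = 'i * ipp (Gp a) (Gp b) - 'i * ipm (Gm a) (Gm b)).

Definition contractive_weyl (V Hp Hm : lmodType C) (ipp : Hp -> Hp -> C)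
  (ipm : Hm -> Hm -> C) (P : V * V -> Prop) (Gp : V * V -> Hp) (Gm : V * V -> Hm)
  (B : C -> Hp -> Hm) (Bstar : C -> Hm -> Hp) : Prop :=
  (forall l, disc l -> is_adjoint ipp ipm (B l) (Bstar l)) /\
  (forall l, disc l ->
     (forall u : Hp, exists a, Nplus P l a /\ Gp a = u) /\
     (forall a b, Nplus P l a -> Nplus P l b -> Gp a = Gp b -> a = b) /\
     (forall a, Nplus P l a -> Gm a = B l (Gp a)) /\
     (exists c : C, c < 1 /\ forall u, hnorm ipm (B l u) <= c * hnorm ipp u)) /\
  (forall l, disc l ->
     (forall v : Hm, exists a, Nminus P l a /\ Gm a = v) /\
     (forall a b, Nminus P l a -> Nminus P l b -> Gm a = Gm b -> a = b) /\
     (forall a, Nminus P l a -> Gp a = Bstar l^* (Gm a))).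

Definition gamma_plus (V Hp : lmodType C) (P : V * V -> Prop) (Gp : V * V -> Hp)
  (gp : C -> Hp -> V * V) : Prop :=
  forall l, disc l -> forall u, Nplus P l (gp l u) /\ Gp (gp l u) = u.
Definition gamma_minus (V Hm : lmodType C) (P : V * V -> Prop) (Gm : V * V -> Hm)
  (gm : C -> Hm -> V * V) : Prop :=
  forall l, disc l -> forall v, Nminus P l (gm l v) /\ Gm (gm l v) = v.

Definition phi_plus (V Hp : lmodType C) (gp : C -> Hp -> V * V) (l : C) (u : Hp) : V :=
  (gp l u).1.
Definition phi_minus (V Hm : lmodType C) (gm : C -> Hm -> V * V) (l : C) (v : Hm) : V :=
  (gm l v).2.

(* fm l x = f_{hat x}(l) = phi_-^dagger(l) (hat x (l)) for l in D_+ ;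
   ((hat x (l), phi_-(conj l) z)) = (x, phi_-(conj l) z)_H *)
Definition triv_minus (V Hm : lmodType C) (ip : V -> V -> C) (ipm : Hm -> Hm -> C)
  (gm : C -> Hm -> V * V) (fm : C -> V -> Hm) : Prop :=
  forall l, disc l -> forall (x : V) (z : Hm), ipm (fm l x) z = ip x (phi_minus gm l^* z).
(* fp l x = f_{hat x}(l) = phi_+^dagger(l) (hat x (l)) for l in D_- *)
Definition triv_plus (V Hp : lmodType C) (ip : V -> V -> C) (ipp : Hp -> Hp -> C)
  (gp : C -> Hp -> V * V) (fp : C -> V -> Hp) : Prop :=
  forall l, disc l -> forall (x : V) (z : Hp), ipp (fp l x) z = ip x (phi_plus gp l^* z).

(* hat x = hat x' as elements of frak H: equal as functionals on
   F^dagger_l = E_{conj l} for every l in D_+ and every l in D_- *)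
Definition hat_eq (V : lmodType C) (ip : V -> V -> C) (P : V * V -> Prop) (x x' : V) : Prop :=
  forall l, disc l ->
    (forall w, Eminus P l^* w -> ip x w = ip x' w) /\
    (forall w, Eplus P l^* w -> ip x w = ip x' w).

Definition in_hatA (V : lmodType C) (ip : V -> V -> C) (T Tadj : V -> V) (x y : V) : Prop :=
  exists x' y', ATperp ip T Tadj (x', y') /\
    hat_eq ip (ATperp ip T Tadj) x x' /\ hat_eq ip (ATperp ip T Tadj) y y'.

End Defs.

(* Main.v *)
Require Import Defs.
From mathcomp Require Import all_boot all_order all_algebra.
From mathcomp Require Import reals complex.
From mathcomp Require Import ring lra.
Import Order.TTheory GRing.Theory Num.Theory.
Local Open Scope ring_scope.
Local Open Scope complex_scope.
Section CJ.
Context {R : realType}.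
Lemma conjcD (a b : R[i]) : conjc (a + b) = conjc a + conjc b. Proof. exact: rmorphD. Qed.
Lemma conjcM (a b : R[i]) : conjc (a * b) = conjc a * conjc b. Proof. exact: rmorphM. Qed.
Lemma conjcN (a : R[i]) : conjc (- a) = - conjc a. Proof. exact: rmorphN. Qed.
Lemma conjcB (a b : R[i]) : conjc (a - b) = conjc a - conjc b. Proof. exact: rmorphB. Qed.
End CJ.
Section IP.
Context {R : realType} {V : lmodType R[i]} {ip : V -> V -> R[i]} (hip : inner_product ip).
Lemma ipDl x y z : ip (x + y) z = ip x z + ip y z.
Proof. by have := hip.1 1 x y z; rewrite scale1r mul1r. Qed.
Lemma ip0l z : ip 0 z = 0.
Proof. by apply: (@addrI _ (ip 0 z)); rewrite -ipDl !addr0. Qed.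
Lemma ipZl a x z : ip (a *: x) z = a * ip x z.
Proof. by have := hip.1 a x 0 z; rewrite addr0 ip0l addr0. Qed.
Lemma ipNl x z : ip (- x) z = - ip x z.
Proof. by rewrite -scaleN1r ipZl mulN1r. Qed.
Lemma ipBl x y z : ip (x - y) z = ip x z - ip y z.
Proof. by rewrite ipDl ipNl. Qed.
Lemma ipC x y : ip y x = conjc (ip x y).
Proof. exact: hip.2.1. Qed.
Lemma ipDr x y z : ip z (x + y) = ip z x + ip z y.
Proof. by rewrite ipC ipDl conjcD -!ipC. Qed.
Lemma ip0r z : ip z 0 = 0.
Proof. by rewrite ipC ip0l conjc0. Qed.
Lemma ipZr a x z : ip z (a *: x) = conjc a * ip z x.
Proof. by rewrite ipC ipZl conjcM -ipC. Qed.
Lemma ipNr x z : ip z (- x) = - ip z x.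
Proof. by rewrite ipC ipNl conjcN -ipC. Qed.
Lemma ipBr x y z : ip z (x - y) = ip z x - ip z y.
Proof. by rewrite ipDr ipNr. Qed.
Lemma ipge0 x : 0 <= ip x x. Proof. exact: hip.2.2.1. Qed.
Lemma ipdef x : ip x x = 0 -> x = 0. Proof. exact: hip.2.2.2. Qed.
Lemma ipext u v : (forall z, ip u z = ip v z) -> u = v.
Proof. move=> h; apply/eqP; rewrite -subr_eq0; apply/eqP/ipdef. by rewrite ipBl h subrr. Qed.
Lemma ipreal x : ip x x = (complex.Re (ip x x))%:C.
Proof. have := ger0_Im (ipge0 x). by case: (ip x x) => a b /= ->. Qed.

Lemma mulcJ_real (c : R[i]) : c * conjc c = (complex.Re (c * conjc c))%:C.
Proof. have := ger0_Im (mulcJ_ge0 c). by case: (c * conjc c) => a b /= ->. Qed.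
Lemma ReD (a b : R[i]) : complex.Re (a + b) = complex.Re a + complex.Re b.
Proof. by case: a; case: b. Qed.
Lemma ReN (a : R[i]) : complex.Re (- a) = - complex.Re a.
Proof. by case: a. Qed.
Lemma ReB (a b : R[i]) : complex.Re (a - b) = complex.Re a - complex.Re b.
Proof. by rewrite ReD ReN. Qed.
Lemma Re_ge0 (a : R[i]) : 0 <= a -> 0 <= complex.Re a.
Proof. by rewrite lecE => /andP[_]. Qed.
Lemma ReipGe0 x : 0 <= complex.Re (ip x x). Proof. exact: Re_ge0 (ipge0 x). Qed.

Lemma CS x y : complex.Re (ip x y * conjc (ip x y)) <= complex.Re (ip x x) * complex.Re (ip y y).
Proof.
have ha := ReipGe0 x; have hb := ReipGe0 y.
case: (eqVneq (ip y y) 0) => [/ipdef -> | bn0].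
  by rewrite ip0r mul0r /= ip0l /= mulr0.
have cb : conjc (ip y y) = ip y y by rewrite {1}ipreal conjc_real -ipreal.
have e : ip (x - (ip x y / ip y y) *: y) (x - (ip x y / ip y y) *: y) =
         ip x x - ip x y * conjc (ip x y) / ip y y.
  rewrite ipBl !ipBr !ipZl !ipZr (ipC x y) conjcM conjc_inv cb.
  by field.
have := ipge0 (x - (ip x y / ip y y) *: y); rewrite e.
rewrite (ipreal x) (ipreal y) (mulcJ_real (ip x y)).
rewrite -fmorphV -rmorphM -rmorphB ler0c => h.
have Bpos : 0 < complex.Re (ip y y).
  rewrite lt0r hb andbT; apply: contra bn0 => /eqP h0; by rewrite ipreal h0.
have := mulr_ge0 h (ltW Bpos); rewrite mulrBl divfK ?gt_eqF // subr_ge0.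
by rewrite -!ipreal.
Qed.
End IP.
Lemma ReMr (R : realType) (r : R) (y : R[i]) : complex.Re (r%:C * y) = r * complex.Re y.
Proof. by case: y => a b /=; rewrite mul0r subr0. Qed.
Lemma disc_conj {R : realType} {l : R[i]} : disc l -> disc (conjc l).
Proof. by case: l => a b; rewrite /disc !normc_def /= sqrrN. Qed.
Lemma disc0 {R : realType} : disc (0 : R[i]).
Proof. by rewrite /disc normr0 ltr01. Qed.

Lemma numconjE (R : realType) (l : R[i]) : Num.conj l = conjc l.
Proof. by []. Qed.
Lemma neq0i {R : realType} : ('i%R : R[i]) != 0.
Proof. exact: neq0Ci. Qed.

Section Main.
Context {R : realType} (H : lmodType R[i]) (ip : H -> H -> R[i]) (T Tadj : H -> H)
  (Hp Hm : lmodType R[i]) (ipp : Hp -> Hp -> R[i]) (ipm : Hm -> Hm -> R[i])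
  (Gp : H * H -> Hp) (Gm : H * H -> Hm)
  (B : R[i] -> Hp -> Hm) (Bstar : R[i] -> Hm -> Hp)
  (gp : R[i] -> Hp -> H * H) (gm : R[i] -> Hm -> H * H)
  (fp : R[i] -> H -> Hp) (fm : R[i] -> H -> Hm).
Local Notation P := (ATperp ip T Tadj).
Hypotheses (hip : inner_product ip) (hipp : inner_product ipp) (hipm : inner_product ipm)
  (adj : is_adjoint ip ip T Tadj)
  (gpH : gamma_plus P Gp gp) (gmH : gamma_minus P Gm gm)
  (injp : forall l, disc l -> forall a b, Nplus P l a -> Nplus P l b -> Gp a = Gp b -> a = b)
  (BGp : forall l, disc l -> forall a, Nplus P l a -> Gm a = B l (Gp a))
  (injm : forall l, disc l -> forall a b, Nminus P l a -> Nminus P l b -> Gm a = Gm b -> a = b)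
  (BstarG : forall l, disc l -> forall a, Nminus P l a -> Gp a = Bstar (conjc l) (Gm a))
  (adjB : forall l, disc l -> is_adjoint ipp ipm (B l) (Bstar l))
  (green : forall a b, P a -> P b ->
      krein ip a b = 'i%R * ipp (Gp a) (Gp b) - 'i%R * ipm (Gm a) (Gm b))
  (linGm : lin_on P Gm)
  (surj : forall u v, exists a, P a /\ Gp a = u /\ Gm a = v)
  (tp : triv_plus ip ipp gp fp) (tm : triv_minus ip ipm gm fm).

Lemma adj2 x y : ip (Tadj y) x = ip y (T x).
Proof. by rewrite (ipC hip) -adj -(ipC hip). Qed.

Lemma AinP m : Kset T Tadj m -> P (m, T m).
Proof. move=> Km b [k [Kk ->]]; by rewrite /krein /= adj Kk subrr. Qed.

Lemma PA' {n m} : P n -> Kset T Tadj m -> ip n.1 m = ip n.2 (T m).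
Proof.
move=> Pn Km; have := Pn (m, T m) (ex_intro _ m (conj Km erefl)).
by rewrite /krein /= => /eqP; rewrite subr_eq0 => /eqP /(mulfI neq0i).
Qed.
Lemma PA {n m} : P n -> Kset T Tadj m -> ip m n.1 = ip (T m) n.2.
Proof. by move=> Pn Km; rewrite (ipC hip) (PA' Pn Km) -(ipC hip). Qed.

Lemma Pcomb c a b : P a -> P b -> P (c *: a + b).
Proof.
move=> Pa Pb b' Ab'.
transitivity (c * krein ip a b' + krein ip b b'); last by rewrite Pa // Pb // mulr0 addr0.
rewrite /krein /= !(ipDl hip) !(ipZl hip); ring.
Qed.

Lemma Pminus_eq {mu n} : disc mu -> Nminus P mu n -> n = gm mu (Gm n).
Proof.
move=> hmu Nn; have [Ng Gg] := gmH _ hmu (Gm n); exact: (injm _ hmu _ _ Nn Ng (esym Gg)).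
Qed.
Lemma Pplus_eq {mu n} : disc mu -> Nplus P mu n -> n = gp mu (Gp n).
Proof.
move=> hmu Nn; have [Ng Gg] := gpH _ hmu (Gp n); exact: (injp _ hmu _ _ Nn Ng (esym Gg)).
Qed.

Lemma green_minus {a l} z : P a -> disc l ->
  ipm (B l (Gp a) - Gm a) z = l * ip a.1 (gm (conjc l) z).2 - ip a.2 (gm (conjc l) z).2.
Proof.
move=> Pa hl; have hl' := disc_conj hl.
have [[Nn1 Pn] Gmn] := gmH _ hl' z.
have := BstarG _ hl' _ (conj Nn1 Pn); rewrite conjcK => Gpn.
have := green _ _ Pa Pn; rewrite /krein Gpn Gmn Nn1 (ipZr hip) conjcK => e.
rewrite (ipBl hipm) (adjB _ hl); apply: (mulfI neq0i); rewrite !mulrBr -e; ring.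
Qed.

Lemma green_plus {a l} z : P a -> disc l ->
  ipp (Gp a - Bstar (conjc l) (Gm a)) z = ip a.1 (gp (conjc l) z).1 - l * ip a.2 (gp (conjc l) z).1.
Proof.
move=> Pa hl; have hl' := disc_conj hl.
have [[Nn2 Pn] Gpn] := gpH _ hl' z.
have := BGp _ hl' _ (conj Nn2 Pn); rewrite Gpn => Gmn.
have := green _ _ Pa Pn; rewrite /krein Gpn Gmn Nn2 (ipZr hip) conjcK => e.
have E : ipm (Gm a) (B (conjc l) z) = ipp (Bstar (conjc l) (Gm a)) z.
  by rewrite (ipC hipm) (adjB _ hl') -(ipC hipp).
rewrite E in e; rewrite (ipBl hipp); apply: (mulfI neq0i); rewrite !mulrBr -e; ring.
Qed.

Lemma fm_eq {l} x y z : disc l ->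
  ipm (l *: fm l x - fm l y) z = l * ip x (gm (conjc l) z).2 - ip y (gm (conjc l) z).2.
Proof. by move=> hl; rewrite (ipBl hipm) (ipZl hipm) !(tm _ hl). Qed.

Lemma fp_eq {l} x y z : disc l ->
  ipp (fp l x - l *: fp l y) z = ip x (gp (conjc l) z).1 - l * ip y (gp (conjc l) z).1.
Proof. by move=> hl; rewrite (ipBl hipp) (ipZl hipp) !(tp _ hl). Qed.



Lemma fwd x y : in_hatA ip T Tadj x y -> exists xp xm,
  (forall l, disc l -> l *: fm l x - fm l y = B l xp - xm) /\
  (forall l, disc l -> fp l x - l *: fp l y = xp - Bstar (conjc l) xm).
Proof.
case=> x' [y' [Pa [hx hy]]].
exists (Gp (x', y')), (Gm (x', y')); split=> l hl; have hl' := disc_conj hl.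
- apply: (ipext hipm) => z; rewrite (fm_eq _ _ _ hl) (green_minus _ Pa hl) /=.
  have Ew : Eminus P (conjc l) (gm (conjc l) z).2.
    by exists (gm (conjc l) z); split => //; exact: (gmH _ hl' z).1.
  by rewrite ((hx l hl).1 _ Ew) ((hy l hl).1 _ Ew).
- apply: (ipext hipp) => z; rewrite (fp_eq _ _ _ hl) (green_plus _ Pa hl) /=.
  have Ew : Eplus P (conjc l) (gp (conjc l) z).1.
    by exists (gp (conjc l) z); split => //; exact: (gpH _ hl' z).1.
  by rewrite ((hx l hl).2 _ Ew) ((hy l hl).2 _ Ew).
Qed.

Lemma lin_solve (c p q r s : R[i]) : c * p - q = c * r - s -> c * (p - r) = q - s.
Proof.
move=> h; have h0 : c * p - q - (c * r - s) = 0 by rewrite h subrr.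
apply/eqP; rewrite -subr_eq0; apply/eqP; rewrite -h0; ring.
Qed.
Lemma lin_solve2 (c p q r s : R[i]) : p - c * q = r - c * s -> p - r = c * (q - s).
Proof.
move=> h; have h0 : p - c * q - (r - c * s) = 0 by rewrite h subrr.
apply/eqP; rewrite -subr_eq0; apply/eqP; rewrite -h0; ring.
Qed.

Lemma kill0_bound k n0 r : (forall mu, disc mu -> forall n, Nminus P mu n -> ip k n.1 = 0) ->
  Nminus P 0 n0 -> 0 < r -> r <= 1/2 ->
  complex.Re (ip k n0.2 * conjc (ip k n0.2)) <=
    4 * r * r * (complex.Re (ip k k) * complex.Re (ip n0.2 n0.2)).
Proof.
move=> hk [N01 P0] r0 r2.
set w := n0.2.
pose lam : R[i] := r%:C.
have lam0 : lam != 0 by rewrite eq_complex /= (gt_eqF r0).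
have hlam : disc lam.
  rewrite /disc ger0_norm ?ler0c ?ltW //.
  rewrite -(rmorph1 (real_complex R)) ltcR; lra.
set z := Gm n0.
have [[Nl1 Pl] Gml] := gmH lam hlam z.
set nl := gm lam z in Nl1 Pl Gml.
have hkwl : ip k nl.2 = 0.
  have := hk lam hlam nl (conj Nl1 Pl); rewrite Nl1 (ipZr hip) conjc_real => /eqP.
  by rewrite mulf_eq0 (negbTE lam0) /= => /eqP.
have Pd := Pcomb (-1) _ _ P0 Pl.
have Gmd : Gm ((-1) *: n0 + nl) = 0 by rewrite linGm // Gml scaleN1r addNr.
have G := green _ _ Pd Pd.
rewrite Gmd (ip0l hipm) mulr0 subr0 /krein /= N01 scale0r scaler0 add0r Nl1 -/w in G.
set wl := nl.2 in G hkwl.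
set X := Gp (-1 *: n0 + nl) in G.
have G' : ip (lam *: wl) (lam *: wl) - ip (-1 *: w + wl) (-1 *: w + wl) = ipp X X.
  by apply: (mulfI neq0i); rewrite mulrBr.
set u := -1 *: w + wl in G'.
have uw : u + w = wl by rewrite /u scaleN1r [- w + wl]addrC subrK.
have hku : ip k u = - ip k w.
  by rewrite /u (ipDr hip) (ipZr hip) hkwl addr0 conjcN conjc1 mulN1r.
clearbody u.
rewrite (ipZl hip) (ipZr hip) conjc_real in G'.
have hA : complex.Re (ip u u) <= r * r * complex.Re (ip wl wl).
  have -> : ip u u = (r * r)%:C * ip wl wl - ipp X X by rewrite -G' rmorphM /lam; ring.
  rewrite ReB ReMr; have := ReipGe0 hipp X; lra.
have hpar : ip wl wl + ip (u - w) (u - w) = ip u u + ip u u + ip w w + ip w w.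
  rewrite -uw !(ipDl hip) !(ipDr hip) ?(ipNl hip) ?(ipNr hip) ?(ipDr hip) ?(ipNr hip); ring.
have hpar' := congr1 (@complex.Re R) hpar; rewrite /= !ReD in hpar'.
have hE := ReipGe0 hip (u - w).
have hCS := CS hip k u; rewrite hku conjcN mulrNN in hCS.
have hW := ReipGe0 hip w; have hK := ReipGe0 hip k; have hA0 := ReipGe0 hip u.
have hrr : r * r <= 1/4 by nra.
have h1 : 0 <= r * r * complex.Re (ip (u - w) (u - w)) by rewrite mulr_ge0 // mulr_ge0 // ltW.
have h2 : 0 <= (1/4 - r * r) * complex.Re (ip u u) by rewrite mulr_ge0 // subr_ge0.
have h4 : complex.Re (ip u u) <= 4 * r * r * complex.Re (ip w w) by nra.
have h5 : complex.Re (ip k k) * complex.Re (ip u u) <=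
          complex.Re (ip k k) * (4 * r * r * complex.Re (ip w w)) by apply: ler_wpM2l.
apply: (le_trans hCS); apply: (le_trans h5); rewrite le_eqVlt; apply/orP; left; apply/eqP; ring.
Qed.

Lemma kill0 k : (forall mu, disc mu -> forall n, Nminus P mu n -> ip k n.1 = 0) ->
  forall n, Nminus P 0 n -> ip k n.2 = 0.
Proof.
move=> hk n Nn.
have hb := fun r => @kill0_bound k n r hk Nn.
move: hb.
set c := ip k n.2.
set Q := complex.Re (c * conjc c).
set M := complex.Re (ip k k) * complex.Re (ip n.2 n.2).
move=> hb.
have hM : 0 <= M by rewrite mulr_ge0 // ReipGe0.
have hQ : 0 <= Q by apply: Re_ge0; exact: mulcJ_ge0.
suff Q0 : Q = 0.
  have : c * conjc c = 0 by rewrite mulcJ_real -/Q Q0.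
  by move/eqP; rewrite mulf_eq0 conjc_eq0 orbb => /eqP.
apply/eqP; rewrite eq_le hQ andbT leNgt; apply/negP => Qpos.
pose D := 2 * Q + 8 * M + 8.
have Dpos : 0 < D by rewrite /D; lra.
pose r := Q / D.
have rpos : 0 < r by rewrite divr_gt0.
have rD : r * D = Q by rewrite /r divfK // gt_eqF.
have r2 : r <= 1/2.
  have : 0 <= (1/2 - r) * D by rewrite mulrBl rD /D; lra.
  by rewrite pmulr_lge0 // subr_ge0.
have h0 := hb r rpos r2.
have h1 : Q * (D * D) <= 4 * (r * D) * (r * D) * M.
  have := ler_wpM2r (mulr_ge0 (ltW Dpos) (ltW Dpos)) h0.
  by move/le_trans; apply; rewrite le_eqVlt; apply/orP; left; apply/eqP; ring.
rewrite rD in h1.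
have h2 : 0 < Q * (D * D - 4 * Q * M).
  apply: mulr_gt0 => //; rewrite /D; nra.
nra.
Qed.

Lemma bwd x y xp xm :
  (forall l, disc l -> l *: fm l x - fm l y = B l xp - xm) ->
  (forall l, disc l -> fp l x - l *: fp l y = xp - Bstar (conjc l) xm) ->
  in_hatA ip T Tadj x y.
Proof.
move=> E1 E2.
have [a [Pa [Ga1 Ga2]]] := surj xp xm.
set d := x - a.1; set e := y - a.2.
have Fm : forall mu, disc mu -> forall n, Nminus P mu n -> ip d n.1 = ip e n.2.
  move=> mu hmu n Nn; have hl := disc_conj hmu.
  have := congr1 (fun v => ipm v (Gm n)) (E1 _ hl).
  rewrite /= (fm_eq _ _ _ hl) -Ga1 -Ga2 (green_minus _ Pa hl) conjcK -(Pminus_eq hmu Nn) => h.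
  by rewrite Nn.1 (ipZr hip) /d /e !(ipBl hip); apply: lin_solve.
have Fp : forall mu, disc mu -> forall n, Nplus P mu n -> ip d n.1 = ip e n.2.
  move=> mu hmu n Nn; have hl := disc_conj hmu.
  have := congr1 (fun v => ipp v (Gp n)) (E2 _ hl).
  rewrite /= (fp_eq _ _ _ hl) -Ga1 -Ga2 (green_plus _ Pa hl) conjcK -(Pplus_eq hmu Nn) => h.
  by rewrite Nn.1 (ipZr hip) /d /e !(ipBl hip); apply: lin_solve2.
have F : forall mu, disc mu -> forall n, Nplus P mu n \/ Nminus P mu n -> ip d n.1 = ip e n.2.
  by move=> mu hmu n [Nn|Nn]; [exact: Fp hmu n Nn | exact: Fm hmu n Nn].
have key : forall h, ip d (h - Tadj (T h)) = 0.
  move=> h; have := Fp 0 disc0 (h - Tadj (T h), 0).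
  rewrite /= (ip0r hip); apply; split; first by rewrite /= scale0r.
  move=> b [m [Km ->]]; rewrite /krein /= (ip0l hip) mulr0 subr0 (ipBl hip) adj2 adj.
  by rewrite (Km : Tadj (T m) = m) subrr mulr0.
have Kd : Kset T Tadj d.
  set h := d - Tadj (T d).
  have hh : ip h h = 0 by rewrite {1}/h (ipBl hip) adj2 adj -(ipBr hip) key.
  by move/(ipdef hip)/eqP: hh; rewrite subr_eq0 => /eqP E; rewrite /Kset -E.
set g := e - T d.
have Gorth : forall mu, disc mu -> forall n, Nplus P mu n \/ Nminus P mu n -> ip g n.2 = 0.
  move=> mu hmu n Nn; have Pn : P n by case: Nn => -[].
  by rewrite /g (ipBl hip) -(F _ hmu _ Nn) (PA Pn Kd) subrr.
have key2 : forall h, ip g (h - T (Tadj h)) = 0.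
  move=> h; have := Gorth 0 disc0 (0, h - T (Tadj h)).
  apply; right; split; first by rewrite /= scale0r.
  move=> b [m [Km ->]]; rewrite /krein /= (ip0l hip) mulr0 sub0r (ipBl hip) adj.
  by rewrite (Km : Tadj (T m) = m) adj2 subrr mulr0 oppr0.
have hg : T (Tadj g) = g.
  set h := g - T (Tadj g).
  have hh : ip h h = 0 by rewrite {1}/h (ipBl hip) adj adj2 -(ipBr hip) key2.
  by move/(ipdef hip)/eqP: hh; rewrite subr_eq0 => /eqP E; rewrite /Kset -E.
set k := Tadj g.
have Kk : Kset T Tadj k by rewrite /Kset /k hg.
have korth : forall mu, disc mu -> forall n, Nplus P mu n \/ Nminus P mu n -> ip k n.1 = 0.
  move=> mu hmu n Nn; have Pn : P n by case: Nn => -[].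
  by rewrite (PA Pn Kk) /k hg (Gorth _ hmu _ Nn).
exists (x + k), y; split; [|split].
- move=> b [m [Km ->]].
  have ex : x = a.1 + d by rewrite /d addrC subrK.
  have ey : y = a.2 + (T d + T k) by rewrite /k hg /g /e [T d + _]addrC subrK [a.2 + _]addrC subrK.
  have e1 := PA' Pa Km.
  have e2 : ip d m = ip (T d) (T m) by rewrite adj (Km : Tadj (T m) = m).
  have e3 : ip k m = ip (T k) (T m) by rewrite adj (Km : Tadj (T m) = m).
  clearbody k; clearbody g; clearbody e d.
  rewrite /krein /= ex ey !(ipDl hip) e1 e2 e3; ring.
- move=> l hl; split=> w [n [Nn <-]]; rewrite (ipDl hip).
  + suff -> : ip k n.2 = 0 by rewrite addr0.
    have hl' := disc_conj hl.
    have := korth _ hl' n (or_intror Nn); rewrite Nn.1 (ipZr hip) conjcK.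
    case: (eqVneq l 0) => [l0 | ln0].
      move=> _; move: Nn; rewrite l0 conjc0 => Nn.
      exact: (kill0 k (fun mu hmu n Nn => korth mu hmu n (or_intror Nn)) n Nn).
    by move/eqP; rewrite mulf_eq0 (negbTE ln0) /= => /eqP.
  + by rewrite (korth _ (disc_conj hl) n (or_introl Nn)) addr0.
- by move=> l hl; split.
Qed.


Lemma main_equiv x y : in_hatA ip T Tadj x y <-> exists xp xm,
  (forall l, disc l -> l *: fm l x - fm l y = B l xp - xm) /\
  (forall l, disc l -> fp l x - l *: fp l y = xp - Bstar (conjc l) xm).
Proof using All.
split; first exact: fwd.
by case=> xp [xm [E1 E2]]; exact: (bwd _ _ _ _ E1 E2).
Qed.
End Main.

Theorem proposition4p15 (R : realType)
  (H : lmodType R[i]) (ip : H -> H -> R[i])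
  (T Tadj : H -> H)
  (Hp Hm : lmodType R[i]) (ipp : Hp -> Hp -> R[i]) (ipm : Hm -> Hm -> R[i])
  (Gp : H * H -> Hp) (Gm : H * H -> Hm)
  (B : R[i] -> Hp -> Hm) (Bstar : R[i] -> Hm -> Hp)
  (gp : R[i] -> Hp -> H * H) (gm : R[i] -> Hm -> H * H)
  (fp : R[i] -> H -> Hp) (fm : R[i] -> H -> Hm) :
  hilbert ip -> separable ip -> infinite_dim H ->
  contraction ip T -> is_adjoint ip ip T Tadj -> cnu ip T Tadj ->
  boundary_quadruple ip ipp ipm (ATperp ip T Tadj) Gp Gm T Tadj ->
  contractive_weyl ipp ipm (ATperp ip T Tadj) Gp Gm B Bstar ->
  gamma_plus (ATperp ip T Tadj) Gp gp ->
  gamma_minus (ATperp ip T Tadj) Gm gm ->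
  triv_plus ip ipp gp fp ->
  triv_minus ip ipm gm fm ->
  forall x y : H,
    in_hatA ip T Tadj x y <->
    exists (xp : Hp) (xm : Hm),
      (forall l : R[i], disc l -> l *: fm l x - fm l y = B l xp - xm) /\
      (forall l : R[i], disc l -> fp l x - l *: fp l y = xp - Bstar l^* xm).
Proof.
move=> [hip _] _ _ _ adj _ BQ CW gpH gmH tp tm x y.
case: BQ => [[hipp _] [[hipm _] [_ [linGm [_ [surj [_ green]]]]]]].
case: CW => [adjB [wp wm]].
exact: (@main_equiv R H ip T Tadj Hp Hm ipp ipm Gp Gm B Bstar gp gm fp fm hip hipp hipm adj gpH gmH
  (fun l hl => (wp l hl).2.1) (fun l hl => (wp l hl).2.2.1)
  (fun l hl => (wm l hl).2.1) (fun l hl => (wm l hl).2.2)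
  adjB green linGm surj tp tm x y).
Qed.
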